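(* Let $T=\bigoplus_p T_p$ be a torsion abelian group with every $T_p$ finite, and let $G$ be a pure subgroup of $\prod_p T_p$ containing $T$ such that $G/T$ is divisible (so $T$ is the torsion subgroup of $G$). Let $\gamma:G\to G$ be any endomorphism and $X=\gamma(G)$, with torsion subgroup $T_X$. Then $T_X=\gamma(T)$ and $X/T_X$ is divisible.
   Context: All groups are abelian; $T_p$ is the $p$-primary component of $T$, and $T=\bigoplus_p T_p$ is identified with its natural image in $\prod_p T_p$. *)

(* Defs.v *)
From mathcomp Require Import all_boot all_algebra.
Set Implicit Arguments. Unset Strict Implicit. Unset Printing Implicit Defensive.
Import GRing.Theory.
Local Open Scope ring_scope.

Section ProdGroup.
Variable T : nat -> finZmodType.

Definition prodT := forall p : nat, T p.
Definition padd (x y : prodT) : prodT := fun p => x p + y p.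
Definition popp (x : prodT) : prodT := fun p => - x p.
Definition pzero : prodT := fun p => 0.
Definition pnat (n : nat) (x : prodT) : prodT := fun p => x p *+ n.

Definition primary_family : Prop :=
  forall p : nat,
    (prime p -> forall x : T p, exists k : nat, x *+ (p ^ k) = 0) /\
    (~~ prime p -> forall x : T p, x = 0).

Definition in_dsum (x : prodT) : Prop :=
  exists N : nat, forall p : nat, (N <= p)%N -> x p = 0.

Definition is_subgroup (G : prodT -> Prop) : Prop :=
  G pzero /\ forall x y, G x -> G y -> G (padd x (popp y)).

Definition pure_in_prod (G : prodT -> Prop) : Prop :=
  forall (n : nat) (x : prodT), (0 < n)%N -> G x ->
    (exists y : prodT, x = pnat n y) -> exists z, G z /\ x = pnat n z.

Definition quot_divisible (G H : prodT -> Prop) : Prop :=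
  forall (n : nat) (x : prodT), (0 < n)%N -> G x ->
    exists y, G y /\ H (padd x (popp (pnat n y))).

(* gamma is an endomorphism of G (its values outside G are irrelevant) *)
Definition is_endo (G : prodT -> Prop) (gamma : prodT -> prodT) : Prop :=
  (forall x, G x -> G (gamma x)) /\
  (forall x y, G x -> G y -> gamma (padd x y) = padd (gamma x) (gamma y)).

Definition is_torsion (x : prodT) : Prop :=
  exists n : nat, (0 < n)%N /\ forall p, x p *+ n = 0.

End ProdGroup.

(* Main.v *)
Require Import Defs.
From mathcomp Require Import all_boot all_algebra.
From Stdlib Require Import FunctionalExtensionality.
Set Implicit Arguments. Unset Strict Implicit.
Import GRing.Theory.
Local Open Scope ring_scope.

Lemma kill_coprime (V : zmodType) (x : V) a b :
  coprime a b -> x *+ a = 0 -> x *+ b = 0 -> x = 0.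
Proof.
move=> cab ha hb.
case: (posnP a) => [a0|apos].
  move: cab; rewrite a0 /coprime gcd0n => /eqP b1.
  by move: hb; rewrite b1 mulr1n.
case: (egcdnP b apos) => km kn E _.
move: E; rewrite (eqP cab) => E.
have : x *+ (km * a) = x *+ (kn * b + 1).
  by rewrite E.
by rewrite mulnC mulrnA ha mul0rn mulrnDr mulr1n mulnC mulrnA hb mul0rn add0r.
Qed.

Section Fam.
Variable T : nat -> finZmodType.
Hypothesis hT : primary_family T.

Lemma exp_kill_p p : prime p -> exists j, forall y : T p, y *+ (p ^ j)%N = 0.
Proof.
move=> pr.
have H : forall s : seq (T p), exists j, forall y, y \in s -> y *+ (p ^ j)%N = 0.
  elim=> [|a s [j IH]]; first by exists 0%N.
  have [k hk] := (hT p).1 pr a.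
  exists (k + j)%N => y; rewrite inE => /orP [/eqP ->|ys].
    by rewrite expnD mulrnA hk mul0rn.
  by rewrite expnD mulnC mulrnA IH // mul0rn.
have [j hj] := H (enum (T p)).
by exists j => y; apply: hj; rewrite mem_enum.
Qed.

Lemma exp_kill p : exists k, (0 < k)%N /\ forall y : T p, y *+ k = 0.
Proof.
case pr: (prime p).
  have [j hj] := exp_kill_p pr.
  by exists (p ^ j)%N; split => //; rewrite expn_gt0 prime_gt0.
exists 1%N; split => // y; rewrite ((hT p).2 (negbT pr) y) mul0rn //.
Qed.

Lemma killN N : exists n, (0 < n)%N /\
  forall p, (p < N)%N -> forall y : T p, y *+ n = 0.
Proof.
elim: N => [|N [n [n0 hn]]]; first by exists 1%N.
have [k [k0 hk]] := exp_kill N.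
exists (n * k)%N; split; first by rewrite muln_gt0 n0.
move=> p; rewrite ltnS leq_eqVlt => /orP [/eqP ->|lt] y.
  by rewrite mulnC mulrnA hk mul0rn.
by rewrite mulrnA hn // mul0rn.
Qed.

Lemma mul_surj p j q : prime p -> (forall y : T p, y *+ (p ^ j)%N = 0) ->
  q != p -> forall z : T q, exists y, y *+ (p ^ j)%N = z.
Proof.
move=> pr hj qp z.
have inj : injective (fun y : T q => y *+ (p ^ j)%N).
  move=> y1 y2 /= e.
  apply/eqP; rewrite -subr_eq0; apply/eqP.
  have e0 : (y1 - y2) *+ (p ^ j)%N = 0 by rewrite mulrnBl e subrr.
  case qpr: (prime q); last by apply: ((hT q).2 (negbT qpr)).
  have [k hk] := (hT q).1 qpr (y1 - y2).
  apply: (kill_coprime _ e0 hk).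
  apply: coprimeXl; apply: coprimeXr.
  by rewrite prime_coprime // dvdn_prime2 // eq_sym.
case: (@injF_bij (T q) _ inj) => g _ gK.
by exists (g z); rewrite gK.
Qed.

Lemma divisible_off p j (s : prodT T) : prime p ->
  (forall y : T p, y *+ (p ^ j)%N = 0) -> s p = 0 ->
  exists y, s = Defs.pnat (p ^ j)%N y.
Proof.
move=> pr hj sp.
exists (fun q => odflt 0 [pick y : T q | y *+ (p ^ j)%N == s q]).
apply: functional_extensionality_dep => q; rewrite /Defs.pnat.
case: pickP => [y /eqP -> //|none] /=.
exfalso.
case: (eqVneq q p) => [eqp|nqp].
  subst q; by move: (none 0); rewrite mul0rn sp eqxx.
have [y hy] := mul_surj pr hj nqp (s q).
by move: (none y); rewrite hy eqxx.
Qed.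

Lemma torsion_dsum (x : prodT T) : is_torsion x -> in_dsum x.
Proof.
move=> [n [n0 hn]]; exists n.+1 => p lt.
case pr: (prime p); last by apply: ((hT p).2 (negbT pr)).
have [k hk] := (hT p).1 pr (x p).
apply: (kill_coprime _ (hn p) hk).
apply: coprimeXr; rewrite coprime_sym prime_coprime //.
apply/negP => /(dvdn_leq n0); rewrite leqNgt lt; done.
Qed.

Lemma dsum_torsion (x : prodT T) : in_dsum x -> exists n, (0 < n)%N /\ Defs.pnat n x = @pzero T.
Proof.
move=> [N hN]; have [n [n0 hn]] := killN N.
exists n; split => //; apply: functional_extensionality_dep => p.
rewrite /Defs.pnat /pzero; case: (ltnP p N) => [lt|ge]; first by rewrite hn.
by rewrite hN // mul0rn.
Qed.

End Fam.

Theorem mainTheorem13 (T : nat -> finZmodType) (hT : primary_family T)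
  (G : prodT T -> Prop) (hG : is_subgroup G)
  (hTG : forall x, in_dsum x -> G x)
  (hpure : pure_in_prod G)
  (hdiv : quot_divisible G (@in_dsum T))
  (gamma : prodT T -> prodT T) (hgamma : is_endo G gamma) :
  let X := fun x : prodT T => exists g, G g /\ x = gamma g in
  let TX := fun x : prodT T => X x /\ is_torsion x in
  (forall x, TX x <-> exists t, in_dsum t /\ x = gamma t) /\
  quot_divisible X TX.
Proof.
move=> X TX.
have [G0 Gsub] := hG.
have [gG gadd] := hgamma.
have FE := @functional_extensionality_dep nat T.
have Gopp y : G y -> G (popp y).
  move=> Gy; have := Gsub _ _ G0 Gy.
  have -> : padd (pzero T) (popp y) = popp y by apply: FE => p; rewrite /padd/pzero add0r.
  done.
have Gadd x y : G x -> G y -> G (padd x y).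
  move=> Gx Gy; have := Gsub _ _ Gx (Gopp _ Gy).
  have -> : padd x (popp (popp y)) = padd x y by apply: FE => p; rewrite /padd/popp opprK.
  done.
have g0 : gamma (pzero T) = (pzero T).
  have := gadd _ _ G0 G0.
  have -> : padd (pzero T) (pzero T) = @pzero T by apply: FE => p; rewrite /padd/pzero addr0.
  move=> h; apply: FE => p; have := congr1 (fun f => f p) h; rewrite /padd /pzero /=.
  by move=> h2; apply/eqP; rewrite -(addrI _ (etrans (addr0 _) h2)).
have Gpnat n z : G z -> G (Defs.pnat n z).
  move=> Gz; elim: n => [|n IH].
    by have -> : Defs.pnat 0 z = (pzero T) by apply: FE => p; rewrite /Defs.pnat/pzero mulr0n.
  have -> : Defs.pnat n.+1 z = padd (Defs.pnat n z) z by apply: FE => p; rewrite /Defs.pnat/padd mulrSr.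
  by apply: Gadd.
have gpnat n z : G z -> gamma (Defs.pnat n z) = Defs.pnat n (gamma z).
  move=> Gz; elim: n => [|n IH].
    have -> : Defs.pnat 0 z = (pzero T) by apply: FE => p; rewrite /Defs.pnat/pzero mulr0n.
    by rewrite g0; apply: FE => p; rewrite /Defs.pnat/pzero mulr0n.
  have -> : Defs.pnat n.+1 z = padd (Defs.pnat n z) z by apply: FE => p; rewrite /Defs.pnat/padd mulrSr.
  rewrite gadd; [|exact: Gpnat|done]. rewrite IH; apply: FE => p; rewrite /Defs.pnat/padd mulrSr //.
have gsub a b p : G a -> G b -> gamma (padd a (popp b)) p = gamma a p - gamma b p.
  move=> Ga Gb.
  have Eab : a = padd (padd a (popp b)) b by apply: FE => q; rewrite /padd/popp subrK.
  have := congr1 gamma Eab; rewrite (gadd _ _ (Gsub _ _ Ga Gb) Gb) => /(congr1 (fun f => f p)).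
  rewrite /padd => ->; by rewrite addrK.
have L p s : G s -> s p = 0 -> gamma s p = 0.
  move=> Gs sp.
  case pr: (prime p); last by apply: ((hT p).2 (negbT pr)).
  have [j hj] := exp_kill_p hT pr.
  have [y ey] := divisible_off hT pr hj sp.
  have pj : (0 < p ^ j)%N by rewrite expn_gt0 prime_gt0.
  have [z [Gz ez]] := hpure (p ^ j)%N s pj Gs (ex_intro _ y ey).
  by rewrite ez gpnat // /Defs.pnat hj.
have Lc p a b : G a -> G b -> a p = b p -> gamma a p = gamma b p.
  move=> Ga Gb e; apply/eqP; rewrite -subr_eq0 -gsub //; apply/eqP.
  by apply: L; [exact: Gsub | rewrite /padd/popp e subrr].
have P1 : forall x, TX x <-> exists t, in_dsum t /\ x = gamma t.
  move=> x; split.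
    move=> [[g [Gg ->]] tor].
    have [N hN] := torsion_dsum hT tor.
    pose t1 : prodT T := fun p => if (p < N)%N then g p else 0.
    have dt : in_dsum t1 by exists N => p le; rewrite /t1 ltnNge le.
    have Gt := hTG _ dt.
    exists t1; split => //; apply: FE => p.
    case: (ltnP p N) => lt.
      by apply: Lc => //; rewrite /t1 lt.
    rewrite hN // L //; by rewrite /t1 ltnNge lt.
  move=> [t [dt ->]]; have Gt := hTG _ dt.
  split; first by exists t.
  have [n [n0 hn]] := dsum_torsion hT dt.
  exists n; split => // p.
  have := congr1 gamma hn; rewrite gpnat // g0 => /(congr1 (fun f => f p)).
  by rewrite /Defs.pnat /pzero.
split => //.
move=> n x n0 [g [Gg ->]].
have [y0 [Gy0 dt]] := hdiv n g n0 Gg.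
exists (gamma y0); split; first by exists y0.
apply/P1; exists (padd g (popp (Defs.pnat n y0))); split => //.
apply: FE => p; rewrite gsub //; last exact: Gpnat.
by rewrite gpnat // /padd /popp.
Qed.
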